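(* Let $(X_n)_{n\in\mathbb{N}}$ be a sequence of finite graphs with $\deg(X_n)\leq D$ and $|X_n|\to\infty$. Given a constant $\epsilon>0$, either there exist $\epsilon$-Følner sets $F_n\subset X_n$ such that $\limsup \frac{|F_n|}{|X_n|}=\frac{1}{2}$ or there exists $\alpha>0$ and $\alpha$-big subgraphs $Y_n\subseteq X_n$ that are $(\delta,D)$-expanders for some $\delta>0$.
   Context: Graphs are finite with no multiple edges nor loops; $\deg(X)$ is the maximum vertex degree and $|X|$ the number of vertices. For $A\subseteq X$, $\partial A$ is the set of edges joining $A$ to $X\smallsetminus A$. A non-empty $A\subset X$ is an $\epsilon$-Følner set if $|A|\leq\frac12|X|$ and $|\partial A|\leq\epsilon|A|$. $X$ is an $\epsilon$-expander if it has no $\epsilon$-Følner sets, and an $(\epsilon,D)$-expander if moreover $\deg(X)\leq D$. Subgraphs are induced subgraphs on vertex subsets; $Y\subseteq X$ is $\alpha$-big if $|Y|\geq\alpha|X|$. *)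

(* Defs.v *)
From mathcomp Require Import all_boot all_order all_algebra.
From mathcomp Require Import all_classical all_reals all_analysis.
Set Implicit Arguments. Unset Strict Implicit. Unset Printing Implicit Defensive.
Import Order.TTheory GRing.Theory Num.Theory.
Local Open Scope ring_scope.

Definition simple_graph (T : finType) (e : rel T) : Prop :=
  symmetric e /\ irreflexive e.

Definition deg_le (T : finType) (e : rel T) (V : {set T}) (D : nat) : Prop :=
  forall x, x \in V -> (#|[set y in V | e x y]| <= D)%N.

(* Edge boundary of A inside the induced subgraph on V:
   edges {x,y} with x in A and y in V \ A (each edge counted once). *)
Definition bdry (T : finType) (e : rel T) (V A : {set T}) : {set T * T} :=
  [set p | [&& p.1 \in A, p.2 \in V :\: A & e p.1 p.2]].

Definition folner (R : realType) (T : finType) (e : rel T) (V : {set T})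
    (eps : R) (A : {set T}) : Prop :=
  [/\ A != finset.set0, A \subset V, (2 * #|A| <= #|V|)%N
    & (#|bdry e V A|%:R <= eps * #|A|%:R :> R)].

Definition expander (R : realType) (T : finType) (e : rel T) (V : {set T})
    (eps : R) : Prop :=
  forall A : {set T}, ~ folner e V eps A.

Definition expanderD (R : realType) (T : finType) (e : rel T) (V : {set T})
    (eps : R) (D : nat) : Prop :=
  expander e V eps /\ deg_le e V D.

(* Main.v *)
Require Import Defs.
From mathcomp Require Import all_boot all_order all_algebra.
From mathcomp Require Import all_classical all_reals all_analysis.
From mathcomp Require Import zify ring lra.
Import Order.TTheory GRing.Theory Num.Theory.
Local Open Scope ring_scope.

Lemma card_setU_le (T : finType) (A B : {set T}) : (#|A :|: B| <= #|A| + #|B|)%N.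
Proof. by rewrite cardsU leq_subr. Qed.

Lemma bdry_swap (T : finType) (e : rel T) (S A : {set T}) :
  symmetric e -> A \subset S ->
  (#|bdry e S (S :\: A)| <= #|bdry e S A|)%N.
Proof.
move=> sym sAS.
rewrite -(card_imset (bdry e S (S :\: A)) (f := fun p : T * T => (p.2, p.1))); last first.
  by move=> [a b] [c d] /= [-> ->].
apply: subset_leq_card; apply/fintype.subsetP => q /imsetP [[a b] + ->].
rewrite !inE /= => /and3P [/andP[naA aS] /andP [nbSA bS] eab].
have bA : b \in A by move: nbSA; rewrite bS andbT negbK.
by rewrite bA naA aS sym eab.
Qed.

Lemma bdry_sub1 (T : finType) (e : rel T) (S B W : {set T}) :
  W \subset B -> B \subset S ->
  bdry e S W \subset bdry e B W :|: bdry e S B.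
Proof.
move=> sWB sBS; apply/fintype.subsetP => [[a b]]; rewrite !inE /= => /and3P [aW /andP [nbW bS] eab].
rewrite aW nbW eab (fintype.subsetP sWB a aW) bS /= andbT.
by case: (b \in B).
Qed.

Lemma bdry_sub2 (T : finType) (e : rel T) (S B W : {set T}) :
  W \subset S :\: B -> B \subset S ->
  bdry e S (B :|: W) \subset bdry e (S :\: B) W :|: bdry e S B.
Proof.
move=> sW sBS; apply/fintype.subsetP => [[a b]]; rewrite !inE /= => /and3P [aBW /andP [nbBW bS] eab].
move: nbBW; rewrite negb_or => /andP [nbB nbW].
rewrite nbB nbW bS eab /= !andbT.
by case/orP: aBW => [->|->]; rewrite ?orbT.
Qed.

Lemma bdry0 (T : finType) (e : rel T) (S : {set T}) : bdry e S finset.set0 = finset.set0.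
Proof. by apply/setP => -[a b]; rewrite !inE. Qed.

Lemma decomp (R : realType) (T : finType) (e : rel T) (m : nat) (d : R) :
  symmetric e -> 0 <= d -> forall k (S : {set T}), (#|S| < m * 2 ^ k)%N ->
  (exists Y : {set T}, [/\ Y \subset S, (m <= #|Y|)%N & expander e Y d]) \/
  (forall t, (t <= #|S|)%N -> exists W : {set T},
     [/\ W \subset S, (#|W| <= t)%N, (t < #|W| + m)%N &
         #|bdry e S W|%:R <= d * k%:R * #|S|%:R]).
Proof.
move=> sym d0.
have base : forall k (S : {set T}), (#|S| < m)%N -> forall t, (t <= #|S|)%N -> exists W : {set T},
     [/\ W \subset S, (#|W| <= t)%N, (t < #|W| + m)%N &
         #|bdry e S W|%:R <= d * k%:R * #|S|%:R].
  move=> k S Sm t tS; exists finset.set0; split.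
  - exact: finset.sub0set.
  - by rewrite cards0.
  - by rewrite cards0 add0n; apply: leq_ltn_trans Sm.
  - by rewrite bdry0 cards0 mulr_ge0 // mulr_ge0.
elim=> [|k IHk] S.
  by rewrite expn0 muln1 => Sm; right; apply: base.
suff H : forall s (S : {set T}), #|S| = s -> (#|S| < m * 2 ^ k.+1)%N ->
  (exists Y : {set T}, [/\ Y \subset S, (m <= #|Y|)%N & expander e Y d]) \/
  (forall t, (t <= #|S|)%N -> exists W : {set T},
     [/\ W \subset S, (#|W| <= t)%N, (t < #|W| + m)%N &
         #|bdry e S W|%:R <= d * k.+1%:R * #|S|%:R]) by exact: H.
elim/ltn_ind => s IHs {}S Ss hS.
case: (ltnP #|S| m) => Sm; first by right; apply: base.
case: (pselect (expander e S d)) => [exS|nexS]; first by left; exists S.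
have [A fA] : exists A, folner e S d A.
  apply: contrapT => H; apply: nexS => A fA; apply: H; by exists A.
case: fA => An0 AS A2 Abd.
set B := S :\: A.
have cB : #|B| = (#|S| - #|A|)%N by rewrite cardsDS.
have AleS : (#|A| <= #|S|)%N by apply: subset_leq_card.
have A0 : (0 < #|A|)%N by rewrite card_gt0.
have cS : #|S| = (#|A| + #|B|)%N by lia.
have hA : (#|A| < m * 2 ^ k)%N.
  move: hS; rewrite expnS mulnCA; lia.
have SBA : S :\: B = A.
  apply/setP => x; rewrite !inE; case xA: (x \in A) => /=; first exact: (fintype.subsetP AS x xA). by case: (x \in S).
have BS : B \subset S by apply: subsetDl.
have bSB : (#|bdry e S B| <= #|bdry e S A|)%N by apply: bdry_swap.
have := IHk A hA => -[[Y [YA mY eY]]|HA].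
  by left; exists Y; split => //; apply: fintype.subset_trans AS.
have := IHs #|B| _ B erefl => -[||[Y [YB mY eY]]|HB].
- by rewrite -Ss cS; lia.
- by apply: leq_ltn_trans hS; rewrite cS leq_addl.
- by left; exists Y; split => //; apply: fintype.subset_trans BS.
have k0 : (0 : R) <= k%:R by [].
have rA : (0 : R) <= #|A|%:R by [].
have rB : (0 : R) <= #|B|%:R by [].
have rS : #|S|%:R = #|A|%:R + #|B|%:R :> R by rewrite cS natrD.
right => t tS; case: (leqP t #|B|) => tB.
  have [W [WB Wt tW bW]] := HB t tB.
  exists W; split => //; first by apply: fintype.subset_trans BS.
  have h1 : (#|bdry e S W| <= #|bdry e B W| + #|bdry e S A|)%N.
    apply: leq_trans (subset_leq_card (@bdry_sub1 _ e _ _ _ WB BS)) _.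
    by apply: leq_trans (card_setU_le _ _ _) _; rewrite leq_add2l.
  have h1' : #|bdry e S W|%:R <= #|bdry e B W|%:R + #|bdry e S A|%:R :> R.
    by rewrite -natrD ler_nat.
  apply: (le_trans h1'); rewrite rS -natr1.
  have := mulr_ge0 (mulr_ge0 d0 k0) rA.
  move: bW Abd; rewrite -natr1; nra.
have [W [WA Wt tW bW]] := HA (t - #|B|)%N ltac:(lia).
exists (B :|: W); split.
- by rewrite finset.subUset BS (fintype.subset_trans WA AS).
- have : (#|B :|: W| <= #|B| + #|W|)%N by apply: card_setU_le.
  lia.
- have dj : #|B :&: W| = 0%N.
    apply/eqP; rewrite cards_eq0; apply/eqP/setP => x; rewrite !inE.
    case xW: (x \in W); last by rewrite andbF.
    by rewrite (fintype.subsetP WA x xW).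
  have := cardsU B W; rewrite dj subn0 => ->; lia.
- have WSB : W \subset S :\: B by rewrite SBA.
  have h1 : (#|bdry e S (B :|: W)| <= #|bdry e A W| + #|bdry e S A|)%N.
    apply: leq_trans (subset_leq_card (@bdry_sub2 _ e _ _ _ WSB BS)) _.
    by rewrite SBA; apply: leq_trans (card_setU_le _ _ _) _; rewrite leq_add2l.
  have h1' : #|bdry e S (B :|: W)|%:R <= #|bdry e A W|%:R + #|bdry e S A|%:R :> R.
    by rewrite -natrD ler_nat.
  apply: (le_trans h1'); rewrite rS -natr1.
  have := mulr_ge0 (mulr_ge0 d0 k0) rB.
  have := mulr_ge0 d0 rB.
  move: bW Abd; nra.
Qed.

Lemma deg_le_sub (T : finType) (e : rel T) (Y : {set T}) (D : nat) :
  deg_le e [set: T] D -> deg_le e Y D.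
Proof.
move=> hd a _; apply: (leq_trans _ (hd a (finset.in_setT a))).
apply: subset_leq_card; apply/fintype.subsetP => y; rewrite !inE => /andP [_ ->].
by [].
Qed.

Lemma expander_small (R : realType) (T : finType) (e : rel T) (Y : {set T}) (d : R) :
  (#|Y| <= 1)%N -> expander e Y d.
Proof.
move=> Y1 A [An0 _ A2 _].
have : (0 < #|A|)%N by rewrite card_gt0.
lia.
Qed.

Lemma max_folner (R : realType) (T : finType) (e : rel T) (eps : R) :
  exists F : {set T}, (F = finset.set0 \/ folner e [set: T] eps F) /\
   forall G, folner e [set: T] eps G -> (#|G| <= #|F|)%N.
Proof.
case: (pselect (exists G, folner e [set: T] eps G)) => [[G0 fG0]|nG]; last first.
  exists finset.set0; split; first by left.
  by move=> G fG; exfalso; apply: nG; exists G.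
pose P k := exists G, folner e [set: T] eps G /\ (k <= #|G|)%N.
have : ~ (forall k, P k -> P k.+1).
  move=> H.
  have : forall k, P k by elim=> [|k IH]; [by exists G0 | exact: H].
  move=> /(_ #|T|.+1) [G [_ hG]].
  have := max_card G; lia.
move=> /existsNP [k /not_implyP [[G [fG kG]] nP]].
exists G; split; first by right.
move=> G' fG'; rewrite leqNgt; apply/negP => lt; apply: nP; exists G'; split => //.
lia.
Qed.

Lemma half_aux x w : (x./2 < w)%N -> (x + 1 <= 2 * w)%N.
Proof. have := odd_double_half x; rewrite -mul2n; have : (odd x <= 1)%N by case: odd. lia. Qed.

Lemma half_aux2 x w : (w <= x./2)%N -> (2 * w <= x)%N.
Proof. have := odd_double_half x; rewrite -mul2n; have : (odd x <= 1)%N by case: odd. lia. Qed.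

Lemma half_le x : (x./2 <= x)%N.
Proof. have := odd_double_half x; rewrite -mul2n; have : (odd x <= 1)%N by case: odd. lia. Qed.

Theorem corollary2p3 (R : realType) (T : nat -> finType)
    (E : forall n, rel (T n)) (D : nat) (eps : R)
    (hsimple : forall n, simple_graph (E n))
    (hdeg : forall n, deg_le (E n) [set: T n] D)
    (hcard : forall M : nat, exists N : nat, forall n, (N <= n)%N -> (M <= #|T n|)%N)
    (heps : 0 < eps) :
  (exists F : forall n, {set T n},
      (forall n, F n = finset.set0 \/ folner (E n) [set: T n] eps (F n)) /\
      limn_sup (fun n => (#|F n|%:R / #|T n|%:R : R)) = 2^-1)
  \/
  (exists (alpha delta : R), 0 < alpha /\ 0 < delta /\
     exists Y : forall n, {set T n},
       forall n, alpha * #|T n|%:R <= #|Y n|%:R /\ expanderD (E n) (Y n) delta D).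
Proof.
have hmax := fun n => @max_folner R (T n) (E n) eps.
pose F := fun n => proj1_sig (cid (hmax n)).
have hF : forall n, (F n = finset.set0 \/ folner (E n) [set: T n] eps (F n)) /\
   forall G, folner (E n) [set: T n] eps G -> (#|G| <= #|F n|)%N.
  by move=> n; exact: (proj2_sig (cid (hmax n))).
pose f := fun n => (#|F n|%:R / #|T n|%:R : R).
have fhalf : forall n, f n <= 2^-1.
  move=> n; rewrite /f; case: (hF n) => -[->|[Fn0 _ F2 _]] _.
    by rewrite cards0 mul0r.
  have Fpos : (0 < #|F n|)%N by rewrite card_gt0.
  have Tpos : (0 < #|T n|)%N by move: F2; rewrite cardsT; lia.
  rewrite ler_pdivrMr ?ltr0n //.
  rewrite cardsT in F2.
  have : (#|F n|%:R * 2 <= #|T n|%:R :> R).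
    by rewrite -natrM ler_nat; lia.
  lra.
have fG : forall n G, folner (E n) [set: T n] eps G -> #|G|%:R / #|T n|%:R <= f n.
  move=> n G fGn; rewrite /f ler_wpM2r ?invr_ge0 // ler_nat.
  exact: (hF n).2.
case: (pselect (forall b : R, b < 2^-1 -> forall N, exists n, (N <= n)%N /\ b < f n)) => [H|H].
  left; exists F; split; first by move=> n; exact: (hF n).1.
  rewrite /limn_sup.
  have -> : sups (fun n => (#|F n|%:R / #|T n|%:R : R)) = fun _ => 2^-1.
    apply: funext => N; rewrite /sups /=.
    have ub : ubound (sdrop f N) 2^-1 by move=> y [k _ <-]; exact: fhalf.
    apply/eqP; rewrite eq_le; apply/andP; split.
      by apply: ge_sup => //; exists (f N); exists N => /=.
    rewrite leNgt; apply/negP => lt.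
    have [n [Nn hn]] := H _ lt N.
    have : f n <= sup (sdrop f N) by apply: ub_le_sup; [exists 2^-1 | exists n].
    by rewrite leNgt hn.
  by rewrite lim_cst.
right.
move: H => /existsNP [b /not_implyP [bhalf /existsNP [N /forallNP H]]].
have fb : forall n, (N <= n)%N -> f n <= b.
  move=> n Nn; rewrite leNgt; apply/negP => h; by apply: (H n); split.
have [b' [bb' b'4 b'h]] : exists b' : R, [/\ b <= b', 4^-1 <= b' & b' < 2^-1].
  by case: (leP b 4^-1) => hb; [exists 4^-1 | exists b]; split => //; lra.
pose g : R := (2^-1 - b') / 2.
have g0 : 0 < g by rewrite /g; lra.
pose q := Num.Def.archi_bound (g^-1).
have hq : g^-1 < q%:R by apply: archi_boundP; rewrite invr_ge0 ltW.
have qg : 1 < q%:R * g.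
  by move: hq; rewrite -div1r ltr_pdivrMr.
have q1 : (1 <= q)%N.
  by move: qg; case: (q) => [|//]; rewrite mul0r; lra.
pose k := q.+1.
have k0 : (0 : R) < k%:R by rewrite ltr0n.
pose dl : R := eps / (4 * k%:R).
have dl0 : 0 < dl by rewrite /dl divr_gt0 // mulr_gt0.
have dlk : dl * k%:R = eps / 4.
  rewrite /dl; field; rewrite gt_eqF //.
have [N2 hN2] := hcard (2 * q)%N.
pose N0 := maxn N N2.
pose M := (\max_(i < N0) #|T i|)%N.
have c0 : (0 < 2 * q * M.+1)%N by rewrite !muln_gt0 q1.
pose al : R := ((2 * q * M.+1)%N%:R)^-1.
have al0 : 0 < al by rewrite /al invr_gt0 ltr0n.
exists al. exists dl. split; first exact: al0. split; first exact: dl0.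
have alx : forall (y x : nat), (x <= y * (2 * q * M.+1))%N -> al * x%:R <= y%:R.
  move=> y x hxy; rewrite /al mulrC ler_pdivrMr ?ltr0n // -natrM ler_nat //.
have hY : forall n, exists Y : {set T n}, al * #|T n|%:R <= #|Y|%:R /\ expanderD (E n) Y dl D.
  move=> n; case: (ltnP n N0) => nN0.
    have xM : (#|T n| <= M)%N := leq_bigmax (F := fun i : 'I_N0 => #|T i|) (Ordinal nN0).
    case: (posnP #|T n|) => [x0|xpos].
      exists finset.set0; split; first by rewrite x0 cards0 mulr0.
      split; first by apply: expander_small; rewrite cards0.
      by apply: deg_le_sub; exact: hdeg.
    move/card_gt0P: xpos => [a _].
    exists [set a]; split.
      apply: alx; rewrite cards1 mul1n mulnC; apply: (leq_trans xM); apply: (leq_trans (leqnSn M)); by apply: leq_pmulr; rewrite muln_gt0 q1.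
    split; first by apply: expander_small; rewrite cards1.
    by apply: deg_le_sub; exact: hdeg.
  have nN : (N <= n)%N by apply: leq_trans nN0; apply: leq_maxl.
  have nN2 : (N2 <= n)%N by apply: leq_trans nN0; apply: leq_maxr.
  have x2q := hN2 n nN2.
  set x := #|T n| in x2q *.
  pose m := (x %/ q)%N.
  have hmq : (m * q <= x)%N := leq_divM x q.
  have hmq2 : (x < m * q + q)%N.
    by rewrite {1}(divn_eq x q) /m ltn_add2l ltn_pmod.
  have m1 : (0 < m)%N by rewrite /m divn_gt0 //; apply: leq_trans x2q; apply: leq_pmull.
  have qmq : (q <= m * q)%N by apply: leq_pmull.
  have xm : (x <= m * (2 * q))%N.
    have -> : (m * (2 * q) = 2 * (m * q))%N by rewrite mulnCA.
    by apply: ltnW; apply: (leq_trans hmq2); rewrite mul2n -addnn leq_add2l qmq.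
  have sym := (hsimple n).1.
  have hS : (#|[set: T n]| < m * 2 ^ k)%N.
    rewrite cardsT -/x /k expnS.
    have h3 : (m * q <= m * 2 ^ q)%N by apply: leq_mul (leqnn m) (ltnW (ltn_expl q (ltnSn 1))).
    have -> : (m * (2 * 2 ^ q) = 2 * (m * 2 ^ q))%N by rewrite mulnCA.
    apply: (leq_trans hmq2); rewrite mul2n -addnn; exact: leq_add h3 (leq_trans qmq h3).
  case: (@decomp R (T n) (E n) m dl sym (ltW dl0) k [set: T n] hS) => [[Y [_ mY eY]]|HW].
    exists Y; split.
      apply: alx; apply: (leq_trans xm); apply: (leq_trans (leq_mul mY (leqnn (2 * q)))).
      by rewrite leq_mul2l leq_pmulr ?orbT.
    by split => //; apply: deg_le_sub; exact: hdeg.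
  exfalso.
  have [W [_ Wt tW bW]] := HW (x./2) ltac:(rewrite cardsT -/x; exact: half_le).
  have h1 : (x + 1 <= 2 * (#|W| + m))%N by apply: half_aux.
  have h1r : x%:R + 1 <= 2 * (#|W|%:R + m%:R) :> R.
    by move: h1; rewrite -(ler_nat R) natrM natrD natrD.
  have h2r : m%:R * q%:R <= x%:R :> R by rewrite -natrM ler_nat.
  have xpos : (0 : R) < x%:R by rewrite ltr0n; apply: leq_trans x2q; rewrite muln_gt0 q1.
  have mg : m%:R <= g * x%:R :> R.
    have t1 : 0 <= m%:R * (q%:R * g - 1) :> R by apply: mulr_ge0 => //; lra.
    have t2 : 0 <= (x%:R - m%:R * q%:R) * g :> R by apply: mulr_ge0; lra.
    lra.
  have gx0 : 0 <= g * x%:R by apply: mulr_ge0; lra.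
  have hWb : b' * x%:R < #|W|%:R.
    have -> : b' * x%:R = 2^-1 * x%:R - 2 * (g * x%:R) by rewrite /g; field.
    lra.
  have x4 : 4^-1 * x%:R <= b' * x%:R by rewrite ler_wpM2r // ltW.
  have Wpos : (0 : R) < #|W|%:R.
    apply: le_lt_trans hWb; apply: mulr_ge0 => //; lra.
  have fW : folner (E n) [set: T n] eps W.
    split.
    - by rewrite -card_gt0 -(ltr0n R).
    - exact: finset.subsetT.
    - by rewrite cardsT -/x; apply: half_aux2.
    - apply: (le_trans bW); rewrite dlk cardsT -/x -mulrA ler_pM2l //; lra.
  have h5 : #|W|%:R <= f n * x%:R by have := fG n W fW; rewrite ler_pdivrMr.
  have h6 := fb n nN.
  have h7 : f n * x%:R <= b' * x%:R by apply: ler_wpM2r; [exact: ltW | exact: le_trans h6 bb'].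
  lra.
exists (fun n => proj1_sig (cid (hY n))) => n; exact: (proj2_sig (cid (hY n))).
Qed.
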